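(* Let $2\le n\le\kappa+1$. Then the subspace $\mathcal K_{[n;\kappa]}$ of skew-symmetric games in $\mathcal G_{[n;\kappa]}\cong\mathbb R^{n\kappa^n}$ has dimension $$\dim\mathcal K_{[n;\kappa]}=\kappa\binom{\kappa}{n-1}=\frac{\kappa\cdot\kappa!}{(n-1)!\,(\kappa-n+1)!}.$$
   Context: A finite game $G\in\mathcal G_{[n;\kappa]}$ has players $\{1,\dots,n\}$, each with strategy set $\{1,\dots,\kappa\}$, and payoff functions $c_i:\{1,\dots,\kappa\}^n\to\mathbb R$; it is identified with the vector of all payoff values in $\mathbb R^{n\kappa^n}$. $G$ is skew-symmetric if for every permutation $\sigma\in\mathbf S_n$, every $i$ and every profile, $c_i(x_1,\dots,x_n)=\mathrm{sgn}(\sigma)\,c_{\sigma(i)}(x_{\sigma^{-1}(1)},\dots,x_{\sigma^{-1}(n)})$. $\mathcal K_{[n;\kappa]}$ is the linear subspace of skew-symmetric games. *)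

(* Defs.v *)
From HB Require Import structures.
From mathcomp Require Import all_boot all_order all_algebra all_fingroup.
From mathcomp Require Import reals.
Set Implicit Arguments. Unset Strict Implicit. Unset Printing Implicit Defensive.
Import GRing.Theory Num.Theory.
Local Open Scope ring_scope.

(* Strategy set {1,...,kappa} is 'I_kappa, players {1,...,n} are 'I_n.
   A strategy profile is a finite function 'I_n -> 'I_kappa. *)
Definition profile (n k : nat) := {ffun 'I_n -> 'I_k}.

(* A game in G_[n;kappa]: the vector of all payoff values c_i(x),
   i.e. an element of R^(n * kappa^n), viewed as a finite function
   on pairs (player, profile).  This is an R-vector space (vectType). *)
Definition game (R : realType) (n k : nat) :=
  {ffun 'I_n * profile n k -> R^o}.

Definition sgnR (R : realType) (n : nat) (s : 'S_n) : R := (-1) ^+ odd_perm s.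

Definition game_act (R : realType) (n k : nat) (s : 'S_n) (c : game R n k)
  : game R n k :=
  [ffun p : 'I_n * profile n k =>
     sgnR R s * c (s p.1, [ffun j => p.2 ((s^-1)%g j)])].

Definition skew_symmetric (R : realType) (n k : nat) (c : game R n k) : Prop :=
  forall (s : 'S_n) (i : 'I_n) (x : profile n k),
    c (i, x) = sgnR R s * c (s i, [ffun j => x ((s^-1)%g j)]).

Definition skew_defect (R : realType) (n k : nat) (s : 'S_n) (c : game R n k)
  : game R n k := c - game_act s c.

Lemma skew_defect_linear (R : realType) (n k : nat) (s : 'S_n) :
  linear (@skew_defect R n k s).
Proof.
move=> a c d; apply/ffunP => p; rewrite !ffunE /game_act /=.
rewrite /GRing.scale /= !mulrDr !mulrN !mulrA [sgnR R s * a]mulrC.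
set u := c p; set v := d p; set w := a * _; set z := _ * d _.
by rewrite opprD !addrA; congr (_ - _); rewrite addrAC.
Qed.

HB.instance Definition _ (R : realType) (n k : nat) (s : 'S_n) :=
  GRing.isLinear.Build R (game R n k) (game R n k) _ (@skew_defect R n k s)
    (skew_defect_linear s).

Definition skew_space (R : realType) (n k : nat) : {vspace game R n k} :=
  (\bigcap_(s : 'S_n) lker (linfun (@skew_defect R n k s)))%VS.

Lemma mem_skew_space (R : realType) (n k : nat) (c : game R n k) :
  c \in skew_space R n k <-> skew_symmetric c.
Proof.
rewrite /skew_space memvE; split.
- move/subv_bigcapP => H s i x.
  have := H s isT; rewrite -memvE memv_ker lfunE /=.
  move/eqP/ffunP/(_ (i, x)); rewrite !ffunE /= => /eqP; rewrite subr_eq0 => /eqP.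
  done.
- move=> H; apply/subv_bigcapP => s _; rewrite -memvE memv_ker lfunE /=.
  apply/eqP/ffunP => -[i x]; rewrite !ffunE /=; apply/eqP; rewrite subr_eq0.
  by apply/eqP; apply: H.
Qed.

(* Main.v *)
Require Import Defs.
From HB Require Import structures.
From mathcomp Require Import all_boot all_order all_algebra all_fingroup.
From mathcomp Require Import reals.
Set Implicit Arguments. Unset Strict Implicit. Unset Printing Implicit Defensive.
Import GRing.Theory Num.Theory.

Section Act.
Variables (n k : nat).
Local Notation Om := ('I_n * profile n k)%type.

Definition act (s : 'S_n) (p : Om) : Om := (s p.1, [ffun j => p.2 ((s^-1)%g j)]).

Lemma actM s t p : act (s * t)%g p = act t (act s p).
Proof.
rewrite /act /= permM; congr pair; apply/ffunP=> j; rewrite !ffunE invMg permM.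
by [].
Qed.

Lemma act1 p : act 1%g p = p.
Proof. by case: p => i x; rewrite /act /= perm1; congr pair; apply/ffunP=> j; rewrite ffunE invg1 perm1. Qed.

Definition injoff (p : Om) := [forall j, forall l,
  ((j != p.1) && (l != p.1) && (p.2 j == p.2 l)) ==> (j == l)].

Definition good (p : Om) := [forall s : 'S_n, (act s p == p) ==> (s == 1%g)].

Lemma injoff_good p : injoff p -> good p.
Proof.
case: p => i x /= /forallP H; apply/forallP => s; apply/implyP => /eqP [Hs Hx].
apply/eqP/permP => j; rewrite perm1.
have [->|ji] := eqVneq j i; first by [].
have Hxj : x (s j) = x j.
  by have := congr1 (fun f : profile n k => f (s j)) Hx; rewrite ffunE permK.
have sji : s j != i by rewrite -[i in _ != i]Hs (inj_eq perm_inj).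
by have /forallP/(_ j) := H (s j); rewrite /= sji ji Hxj eqxx /= => /eqP.
Qed.

Lemma notinjoff_odd p : ~~ injoff p -> exists s, act s p = p /\ odd_perm s.
Proof.
case: p => i x /= /forallPn [j] /forallPn [l]; rewrite negb_imply /=.
case/andP => /andP [/andP [ji li] /eqP xjl] jl.
exists (tperm j l); split; last by rewrite odd_tperm.
rewrite /act /= tpermD 1?(eq_sym i) //; congr (_, _); apply/ffunP => m.
by rewrite ffunE tpermV; case: tpermP => // ->.
Qed.

Lemma good_injoff p : good p = injoff p.
Proof.
apply/idP/idP; last exact: injoff_good.
move=> g; apply/negPn/negP => /notinjoff_odd [s [Hs Ho]].
move/forallP/(_ s): g; rewrite Hs eqxx /= => /eqP s1.
by move: Ho; rewrite s1 odd_perm1.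
Qed.

Lemma good_act s p : good p -> good (act s p).
Proof.
move/forallP => H; apply/forallP => t; apply/implyP => /eqP Ht.
have : act (s * t * s^-1)%g p = p by rewrite !actM Ht -actM mulgV act1.
move/eqP; move/implyP: (H (s * t * s^-1)%g) => I /I /eqP E.
apply/eqP; have -> : t = (s^-1 * (s * t * s^-1) * s)%g by rewrite !mulgA mulVg mul1g mulgKV.
by rewrite E mulg1 mulVg.
Qed.

Definition orbit (p : Om) := [set act s p | s : 'S_n].
Definition rep (p : Om) := odflt p [pick q in orbit p].

Lemma rep_in p : exists s, rep p = act s p.
Proof.
rewrite /rep; case: pickP => [q /imsetP [s _ ->]|_] /=; first by exists s.
by exists 1%g; rewrite act1.
Qed.

Lemma orbit_act s p : orbit (act s p) = orbit p.
Proof.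
apply/setP => q; apply/imsetP/imsetP => [[t _ ->]|[t _ ->]].
  by exists (s * t)%g; rewrite // actM.
by exists (s^-1 * t)%g; rewrite // -actM mulKVg.
Qed.

Lemma rep_act s p : rep (act s p) = rep p.
Proof.
rewrite /rep orbit_act; case: pickP => // H.
by have := H p; rewrite /orbit; move/negbT/imsetP; case; exists 1%g; rewrite ?act1.
Qed.

Definition Reps := [set p | good p && (rep p == p)].

Lemma rep_Reps p : good p -> rep p \in Reps.
Proof.
move=> g; have [s Hs] := rep_in p.
by rewrite inE {2}Hs rep_act Hs good_act //= eqxx.
Qed.

Lemma Reps_uniq r r' s : r \in Reps -> r' \in Reps -> act s r' = r -> r = r' /\ s = 1%g.
Proof.
rewrite !inE => /andP [gr /eqP rr] /andP [gr' /eqP rr'] H.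
have E : r = r' by rewrite -rr -rr' -H rep_act.
split => //; move: H; rewrite E => /eqP H.
by move/forallP/(_ s): gr'; rewrite H => /eqP.
Qed.

Lemma card_Reps : (#|Reps| * n`! = #|[set p | good p]|)%N.
Proof.
pose h (sp : 'S_n * Om) := act sp.1 sp.2.
have -> : [set p | good p] = h @: setX [set: 'S_n] Reps.
  apply/setP => p; rewrite inE; apply/idP/imsetP.
    move=> g; have [s Hs] := rep_in p.
    exists (s^-1, rep p)%g; first by rewrite inE /= in_setT rep_Reps.
    by rewrite /h /= Hs -actM mulgV act1.
  case => [[s r]]; rewrite inE /= => /andP [_]; rewrite inE => /andP [g _] ->.
  exact: good_act.
rewrite card_in_imset ?cardsX ?cardsT ?card_Sn 1?mulnC //.
move=> [s r] [t r'] /setXP [_ Hr] /setXP [_ Hr'].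
rewrite /h /= => E.
have : act (s * t^-1)%g r = r' by rewrite actM E -actM mulgV act1.
by case/(Reps_uniq Hr' Hr) => -> /eqP; rewrite -eq_mulgV1 => /eqP ->.
Qed.

End Act.
Section Count.
Variables (n' k : nat).
Local Notation n := n'.+1.
Local Notation Om := ('I_n * profile n k)%type.

Lemma card_injoff_i (i : 'I_n) :
  #|[set x : profile n k | injoff (i, x)]| = (k * k ^_ n')%N.
Proof.
pose G (x : profile n k) := (x i, [ffun j => x (lift i j)] : {ffun 'I_n' -> 'I_k}).
pose F (af : 'I_k * {ffun 'I_n' -> 'I_k}) : profile n k :=
  [ffun j => if unlift i j is Some j' then af.2 j' else af.1].
have FK : cancel F G.
  by move=> [a f]; rewrite /G /F /= ffunE unlift_none; congr (_, _); apply/ffunP => j; rewrite !ffunE liftK.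
have -> : [set x : profile n k | injoff (i, x)] =
          F @: setX [set: 'I_k] [set f : {ffun 'I_n' -> 'I_k} | injectiveb f].
  apply/setP => x; rewrite inE; apply/idP/imsetP.
    move/forallP => H; exists (G x).
      rewrite inE /= in_setT inE /=; apply/injectiveP => j l; rewrite !ffunE => E.
      have /forallP/(_ (lift i l)) := H (lift i j).
      by rewrite /= E eqxx !(eq_sym _ i) !neq_lift /= (inj_eq (lift_inj (h:=i))) => /eqP.
    apply/ffunP => j; rewrite /F /G !ffunE; by case: unliftP => [j' ->|->]; rewrite ?ffunE.
  case => [[a f]] /setXP [_]; rewrite inE => /injectiveP fi ->.
  apply/forallP => j; apply/forallP => l; apply/implyP; rewrite /= !ffunE.
  case: unliftP => [j' ->|->]; last by rewrite eqxx.
  case: unliftP => [l' ->|->]; last by rewrite eqxx andbF.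
  by case/andP => _ /eqP /fi ->.
rewrite card_imset; last exact: can_inj FK.
by rewrite cardsX cardsT card_ord card_inj_ffuns !card_ord.
Qed.

Lemma card_injoff : #|[set p : Om | injoff p]| = (n * (k * k ^_ n'))%N.
Proof.
transitivity (\sum_(i < n) #|[set x : profile n k | injoff (i,x)]|)%N; last first.
  rewrite (eq_bigr _ (fun i _ => card_injoff_i i)).
  by rewrite big_const_ord iter_addn_0 mulnC.
rewrite (eq_bigr (fun i => \sum_(x : profile n k) (if injoff (i,x) then 1 else 0))%N); last first.
  by move=> i _; rewrite -sum1_card big_mkcond /=; apply: eq_bigr => x _; rewrite inE.
rewrite pair_big /= -sum1_card big_mkcond /=; apply: eq_bigr => [[i x]] _.
by rewrite inE.
Qed.
End Count.
Local Open Scope ring_scope.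

Lemma sgnRM (R : realType) n (s t : 'S_n) : sgnR R (s * t)%g = sgnR R s * sgnR R t.
Proof. by rewrite /sgnR odd_permM signr_addb. Qed.

Lemma sgnR1 (R : realType) n : sgnR R (1%g : 'S_n) = 1.
Proof. by rewrite /sgnR odd_perm1. Qed.

Lemma skewP (R : realType) n k (c : game R n k) :
  c \in skew_space R n k <-> forall s p, c p = sgnR R s * c (act s p).
Proof.
rewrite mem_skew_space; split => H.
  by move=> s [i x]; apply: H.
by move=> s i x; apply: (H s (i, x)).
Qed.

Lemma skew_odd (R : realType) n k (c : game R n k) s p :
  c \in skew_space R n k -> act s p = p -> odd_perm s -> c p = 0.
Proof.
move/skewP/(_ s p) => H Hs Ho; move: H; rewrite Hs /sgnR Ho expr1 mulN1r.
move/eqP; rewrite -subr_eq0 opprK -mulr2n mulrn_eq0 /= => /eqP //.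
Qed.

Definition gv (R : realType) n k (r : 'I_n * profile n k) : game R n k :=
  [ffun p => \sum_(s : 'S_n) sgnR R s * (act s p == r)%:R].

Lemma gv_skew (R : realType) n k r : gv R r \in skew_space R n k.
Proof.
apply/skewP => t p; rewrite !ffunE.
rewrite [LHS](reindex_inj (mulgI t)) mulr_sumr; apply: eq_bigr => s _.
by rewrite actM sgnRM mulrA.
Qed.

Lemma gv_Reps (R : realType) n k (r r' : 'I_n * profile n k) :
  r \in Reps n k -> r' \in Reps n k -> gv R r r' = (r == r')%:R.
Proof.
move=> Hr Hr'; rewrite ffunE (bigD1 1%g) //= big1 ?addr0.
  by rewrite sgnR1 mul1r act1 eq_sym.
move=> s s1; case E: (act s r' == r); last by rewrite mulr0.
by case: (Reps_uniq Hr Hr' (eqP E)) => _ s1'; move: s1; rewrite s1' eqxx.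
Qed.

Definition Phi (R : realType) n k (c : game R n k) : 'rV[R]_#|Reps n k| :=
  \row_j c (enum_val j).

Lemma Phi_linear (R : realType) n k : linear (@Phi R n k).
Proof. by move=> a c d; apply/rowP => j; rewrite !mxE !ffunE. Qed.

HB.instance Definition _ (R : realType) (n k : nat) :=
  GRing.isLinear.Build R (game R n k) 'rV[R]_#|Reps n k| _ (@Phi R n k)
    (@Phi_linear R n k).

Lemma dim_skew (R : realType) n k : \dim (skew_space R n k) = #|Reps n k|.
Proof.
apply/eqP; rewrite eqn_leq; apply/andP; split.
  rewrite -(limg_dim_eq (f := linfun (@Phi R n k))).
    apply: leq_trans (dimvS (subvf _)) _; rewrite dimvf dim_matrix.
    exact: (eq_leq (mul1n _)).
  apply/eqP; rewrite -subv0; apply/subvP => c; rewrite memv_cap memv_ker lfunE memv0 /=.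
  case/andP => cU /eqP Pc; apply/eqP/ffunP => p; rewrite ffunE.
  case gp: (good p).
    have [s Hs] := rep_in p.
    have := congr1 (fun M : 'rV[R]_#|Reps n k| => M 0 (enum_rank_in (rep_Reps gp) (rep p))) Pc.
    rewrite !mxE enum_rankK_in ?rep_Reps // => H0.
    by move/skewP: cU => /(_ s p) ->; rewrite -Hs H0 mulr0.
  move/negbT: gp; rewrite good_injoff => /notinjoff_odd [s [Hs Ho]].
  exact: skew_odd cU Hs Ho.
pose X := [tuple gv R (enum_val j : 'I_n * profile n k) | j < #|Reps n k|].
have XE : forall j : 'I_#|Reps n k|, X`_j = gv R (enum_val j).
  by move=> j; rewrite -(tnth_nth 0) tnth_mktuple.
have scE : forall (b : R) (f : game R n k) p, (b *: f) p = b * f p.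
  by move=> b f p; rewrite ffunE.
have fX : free X.
  apply/freeP => a Ha i.
  have := congr1 (fun c : game R n k => c (enum_val i)) Ha.
  rewrite sum_ffunE ffunE (bigD1 i) // big1 ?addr0.
    by rewrite scE XE gv_Reps ?enum_valP // eqxx mulr1 => <-; rewrite [RHS]addr0.
  move=> j /andP [_ ji]; rewrite scE XE gv_Reps ?enum_valP //.
  by rewrite (inj_eq enum_val_inj) (negbTE ji) mulr0.
rewrite -[X in (X <= _)%N](size_tuple X) -(eqnP fX).
apply: dimvS; apply/span_subvP => v /tnthP [j ->]; rewrite tnth_mktuple.
exact: gv_skew.
Qed.

Theorem corollary4p6 (R : realType) (n k : nat) :
  (2 <= n)%N -> (n <= k.+1)%N ->
  \dim (skew_space R n k) = (k * 'C(k, n.-1))%N.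
Proof.
case: n => [//|n'] _ _ /=; rewrite dim_skew.
have H := card_Reps n'.+1 k.
have E : [set p | good p] = [set p : 'I_n'.+1 * profile n'.+1 k | injoff p].
  by apply/setP => p; rewrite !inE good_injoff.
rewrite E card_injoff factS -bin_ffact in H.
apply/eqP; rewrite -(eqn_pmul2r (fact_gt0 n')) -(eqn_pmul2r (ltn0Sn n')).
apply/eqP; rewrite -!mulnA [(n'`! * _)%N]mulnC H mulnC -!mulnA; congr (k * ('C(k, n') * _))%N; exact: mulnC.
Qed.
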